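(* Let $\Phi(x_1,\dots,x_n)$ be an open formula of the language $\mathcal{L}_{\mathrm{pAb}}$ with $n$ variables, and let $N=\sharp(\Phi)$. Assume that $\mathbf{R}_{-1}\models\exists x_1\cdots\exists x_n\,\Phi$. Then there are integers $c$ and $M$ and real numbers $a_1,\dots,a_n$ such that $\Phi(a_1,\dots,a_n)$ holds in $\mathbf{R}_{-1}$, $-2^M\le a_i\le 2^M$ for each $1\le i\le n$, and the binary representation of $M$ has at most $cN\log_2 N$ bits.
   Context: $\mathcal{L}_{\mathrm{pAb}}=\langle +,-,0,-1,\wedge,\vee\rangle$ is the language of pointed abelian lattice-ordered groups. $\mathbf{R}_{-1}=\langle \mathbb{R},+,-,\wedge,\vee,0,-1\rangle$ is the additive group of the reals with $\wedge=\min$, $\vee=\max$, and constant $-1$ interpreted as $-1$. An open formula is a finite Boolean combination (negation, conjunction, disjunction) of atoms $\phi=\psi$ with $\phi,\psi$ terms. The size $\sharp(\phi)$ of a term is the number of occurrences of variables and constants in $\phi$; the size $\sharp(\Phi)$ of an open formula is the sum of the sizes of all occurrences of terms in its atoms. *)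

(* Defs.v *)
From Stdlib Require Import Reals ZArith List.
Open Scope R_scope.

Inductive term : Type :=
  | TVar : nat -> term
  | TZero : term
  | TMinusOne : term
  | TAdd : term -> term -> term
  | TNeg : term -> term
  | TMeet : term -> term -> term
  | TJoin : term -> term -> term.

Inductive oformula : Type :=
  | FAtom : term -> term -> oformula
  | FNot : oformula -> oformula
  | FAnd : oformula -> oformula -> oformula
  | FOr : oformula -> oformula -> oformula.

Fixpoint teval (a : nat -> R) (t : term) : R :=
  match t with
  | TVar i => a i
  | TZero => 0
  | TMinusOne => -1
  | TAdd t1 t2 => teval a t1 + teval a t2
  | TNeg t1 => - teval a t1
  | TMeet t1 t2 => Rmin (teval a t1) (teval a t2)
  | TJoin t1 t2 => Rmax (teval a t1) (teval a t2)
  end.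

Fixpoint holds (a : nat -> R) (f : oformula) : Prop :=
  match f with
  | FAtom t1 t2 => teval a t1 = teval a t2
  | FNot g => ~ holds a g
  | FAnd g h => holds a g /\ holds a h
  | FOr g h => holds a g \/ holds a h
  end.

Fixpoint tsize (t : term) : nat :=
  match t with
  | TVar _ | TZero | TMinusOne => 1%nat
  | TAdd t1 t2 | TMeet t1 t2 | TJoin t1 t2 => (tsize t1 + tsize t2)%nat
  | TNeg t1 => tsize t1
  end.

Fixpoint fsize (f : oformula) : nat :=
  match f with
  | FAtom t1 t2 => (tsize t1 + tsize t2)%nat
  | FNot g => fsize g
  | FAnd g h | FOr g h => (fsize g + fsize h)%nat
  end.

Fixpoint tvars_below (n : nat) (t : term) : Prop :=
  match t with
  | TVar i => (i < n)%nat
  | TZero | TMinusOne => True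
  | TAdd t1 t2 | TMeet t1 t2 | TJoin t1 t2 => tvars_below n t1 /\ tvars_below n t2
  | TNeg t1 => tvars_below n t1
  end.

Fixpoint fvars_below (n : nat) (f : oformula) : Prop :=
  match f with
  | FAtom t1 t2 => tvars_below n t1 /\ tvars_below n t2
  | FNot g => fvars_below n g
  | FAnd g h | FOr g h => fvars_below n g /\ fvars_below n h
  end.

(* Number of bits of the binary representation of an integer M
   (of its absolute value; 0 is written with one bit). *)
Definition nbits (M : Z) : Z := (Z.log2 (Z.abs M) + 1)%Z.

Definition log2R (x : R) : R := ln x / ln 2.

(* Main.v *)
Require Import Defs.
From Stdlib Require Import Reals ZArith Lra Lia List Classical.
Import ListNotations.
Open Scope R_scope.

Definition samesign (x y : R) := (x < 0 /\ y < 0) \/ (x = 0 /\ y = 0) \/ (0 < x /\ 0 < y).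

Lemma ss_refl x : samesign x x.
Proof. unfold samesign. destruct (total_order_T x 0) as [[h|h]|h]; lra. Qed.

Lemma ss_mul k x y : samesign x y -> samesign (k*x) (k*y).
Proof. intros. unfold samesign in *. destruct (total_order_T k 0) as [[h|h]|h]. nra. subst; lra. nra. Qed.

Lemma ss_mul_inv k x y : k <> 0 -> samesign (k*x) (k*y) -> samesign x y.
Proof. intros Hk H. apply (ss_mul (/k)) in H.
  replace (/k*(k*x)) with x in H by (field; auto).
  replace (/k*(k*y)) with y in H by (field; auto). exact H. Qed.

Lemma abs_le_iff x K : Rabs x <= K <-> -K <= x <= K.
Proof. unfold Rabs; destruct (Rcase_abs x); split; intros; lra. Qed.

Definition lin := list (nat * Z).
Fixpoint lev (a : nat -> R) (l : lin) : R :=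
  match l with nil => 0 | p :: l' => IZR (snd p) * a (fst p) + lev a l' end.
Fixpoint lnorm (l : lin) : Z :=
  match l with nil => 0%Z | p :: l' => (Z.abs (snd p) + lnorm l')%Z end.
Definition form := (lin * Z)%type.
Definition fev (a : nat -> R) (f : form) : R := lev a (fst f) + IZR (snd f).
Definition fnorm (f : form) : Z := (lnorm (fst f) + Z.abs (snd f))%Z.

Lemma lnorm_nonneg l : (0 <= lnorm l)%Z.
Proof. induction l; simpl; lia. Qed.
Lemma fnorm_nonneg f : (0 <= fnorm f)%Z.
Proof. unfold fnorm. pose proof (lnorm_nonneg (fst f)). lia. Qed.

Lemma lev_app a l1 l2 : lev a (l1 ++ l2) = lev a l1 + lev a l2.
Proof. induction l1; simpl; [ring|rewrite IHl1; ring]. Qed.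
Lemma lnorm_app l1 l2 : lnorm (l1 ++ l2) = (lnorm l1 + lnorm l2)%Z.
Proof. induction l1; simpl; [lia|rewrite IHl1; lia]. Qed.

Definition lscale (z : Z) (l : lin) : lin := map (fun p => (fst p, (z * snd p)%Z)) l.
Lemma lev_scale a z l : lev a (lscale z l) = IZR z * lev a l.
Proof. induction l; simpl. ring. rewrite IHl, mult_IZR. ring. Qed.
Lemma lnorm_scale z l : lnorm (lscale z l) = (Z.abs z * lnorm l)%Z.
Proof. induction l; simpl. lia. rewrite IHl, Z.abs_mul. ring. Qed.

Definition fadd (f g : form) : form := (fst f ++ fst g, (snd f + snd g)%Z).
Definition fscale (z : Z) (f : form) : form := (lscale z (fst f), (z * snd f)%Z).
Definition fsub (f g : form) : form := fadd f (fscale (-1) g).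

Lemma fev_add a f g : fev a (fadd f g) = fev a f + fev a g.
Proof. unfold fev, fadd; simpl. rewrite lev_app, plus_IZR. ring. Qed.
Lemma fev_scale a z f : fev a (fscale z f) = IZR z * fev a f.
Proof. unfold fev, fscale; simpl. rewrite lev_scale, mult_IZR. ring. Qed.
Lemma fev_sub a f g : fev a (fsub f g) = fev a f - fev a g.
Proof. unfold fsub. rewrite fev_add, fev_scale. simpl (IZR (-1)). ring. Qed.

Lemma fnorm_add f g : (fnorm (fadd f g) <= fnorm f + fnorm g)%Z.
Proof. unfold fnorm, fadd; simpl. rewrite lnorm_app. lia. Qed.
Lemma fnorm_scale z f : fnorm (fscale z f) = (Z.abs z * fnorm f)%Z.
Proof. unfold fnorm, fscale; simpl. rewrite lnorm_scale, Z.abs_mul. ring. Qed.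
Lemma fnorm_sub f g : (fnorm (fsub f g) <= fnorm f + fnorm g)%Z.
Proof. unfold fsub. pose proof (fnorm_add f (fscale (-1) g)). rewrite fnorm_scale in H. lia. Qed.

Lemma lev_bound a l B : (forall i, Rabs (a i) <= B) -> Rabs (lev a l) <= IZR (lnorm l) * B.
Proof. intros HB. induction l as [|p l IH]; simpl.
  - rewrite Rabs_R0. lra.
  - rewrite plus_IZR. eapply Rle_trans. apply Rabs_triang. rewrite Rabs_mult, <- abs_IZR.
    assert (0 <= IZR (Z.abs (snd p))) by (apply IZR_le; lia).
    pose proof (HB (fst p)). nra. Qed.

Lemma fev_bound a f B : 0 <= B -> (forall i, Rabs (a i) <= B) -> Rabs (fev a f) <= IZR (fnorm f) * (B + 1).
Proof. intros H0 HB. unfold fev, fnorm. pose proof (lev_bound a (fst f) B HB).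
  eapply Rle_trans. apply Rabs_triang. rewrite <- abs_IZR, plus_IZR.
  assert (0 <= IZR (Z.abs (snd f))) by (apply IZR_le; lia).
  assert (0 <= IZR (lnorm (fst f))) by (apply IZR_le; apply lnorm_nonneg). nra. Qed.

Lemma lev_ext a b l : (forall p, In p l -> a (fst p) = b (fst p)) -> lev a l = lev b l.
Proof. induction l as [|p l IH]; simpl; intros H. auto. rewrite H by auto. rewrite IH by auto. auto. Qed.

Fixpoint coef (j : nat) (l : lin) : Z :=
  match l with nil => 0%Z | p :: l' => if Nat.eqb (fst p) j then (snd p + coef j l')%Z else coef j l' end.
Definition rest (j : nat) (l : lin) : lin := filter (fun p => negb (Nat.eqb (fst p) j)) l.

Lemma lev_split a j l : lev a l = IZR (coef j l) * a j + lev a (rest j l).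
Proof. induction l as [|p l IH]; simpl. ring.
  destruct (Nat.eqb_spec (fst p) j) as [e|e]; simpl.
  - rewrite IH, plus_IZR, e. ring.
  - rewrite IH. ring. Qed.

Lemma lnorm_split j l : (Z.abs (coef j l) + lnorm (rest j l) <= lnorm l)%Z.
Proof. induction l as [|p l IH]; simpl. lia.
  destruct (Nat.eqb_spec (fst p) j) as [e|e]; simpl; lia. Qed.

Lemma in_rest j l p : In p (rest j l) -> fst p <> j /\ In p l.
Proof. unfold rest. rewrite filter_In. intros [H1 H2]. split; auto.
  destruct (Nat.eqb_spec (fst p) j); simpl in H2; auto; discriminate. Qed.

Lemma maxP {A} (h : A -> R) (P : A -> Prop) (L : list A) :
 (forall f, In f L -> ~ P f) \/ exists l, In l L /\ P l /\ forall f, In f L -> P f -> h f <= h l.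
Proof. induction L as [|x L IH]. left; intros f [].
destruct (classic (P x)) as [Hx|Hx].
- right. destruct IH as [IH|[l [Hl [Pl Hmax]]]].
  + exists x. split; [left; auto|split; auto]. intros f [<-|Hf] Pf. lra. exfalso; exact (IH f Hf Pf).
  + destruct (Rle_dec (h x) (h l)).
    * exists l. repeat split; [right; auto|auto|]. intros f [<-|Hf] Pf; auto.
    * exists x. repeat split; [left; auto|auto|]. intros f [<-|Hf] Pf. lra. specialize (Hmax f Hf Pf); lra.
- destruct IH as [IH|[l [Hl [Pl Hmax]]]].
  + left. intros f [<-|Hf]; auto.
  + right. exists l. repeat split; [right; auto|auto|]. intros f [<-|Hf] Pf; [contradiction|auto].
Qed.

Lemma oneD {A} (T : list A) (ta tb : A -> R) (x K : R) :
  0 <= K -> (forall f, In f T -> Rabs (tb f) <= K) ->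
  (forall f g, In f T -> In g T -> samesign (ta g - ta f) (tb g - tb f)) ->
  exists y, Rabs y <= K + 1 /\ forall f, In f T -> samesign (x - ta f) (y - tb f).
Proof.
 intros HK Hb Hp.
 destruct (classic (exists g, In g T /\ ta g = x)) as [[g [Hg Hgx]]|Hno].
 - exists (tb g). split. specialize (Hb g Hg); lra. intros f Hf. rewrite <- Hgx. apply Hp; auto.
 - assert (Hne: forall f, In f T -> ta f <> x) by (intros f Hf E; apply Hno; eauto).
   destruct (maxP ta (fun f => ta f < x) T) as [HL|[l [Hl [Pl Ml]]]];
   destruct (maxP (fun f => - ta f) (fun f => x < ta f) T) as [HU|[u [Hu [Pu Mu]]]].
   + exists 0. split. rewrite Rabs_R0; lra. intros f Hf. exfalso. specialize (Hne f Hf).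
     destruct (Rtotal_order (ta f) x) as [h|[h|h]]. apply (HL f Hf h). auto. apply (HU f Hf h).
   + exists (tb u - 1). split. specialize (Hb u Hu). rewrite abs_le_iff in *. lra.
     intros f Hf. specialize (Hne f Hf).
     assert (x < ta f). { destruct (Rtotal_order (ta f) x) as [h|[h|h]]; auto. destruct (HL f Hf h). contradiction. }
     specialize (Mu f Hf H). specialize (Hp u f Hu Hf). unfold samesign in *. lra.
   + exists (tb l + 1). split. specialize (Hb l Hl). rewrite abs_le_iff in *. lra.
     intros f Hf. specialize (Hne f Hf).
     assert (ta f < x). { destruct (Rtotal_order (ta f) x) as [h|[h|h]]; auto. contradiction. destruct (HU f Hf h). }
     specialize (Ml f Hf H). specialize (Hp f l Hf Hl). unfold samesign in *. lra.
   + exists ((tb l + tb u)/2). split. pose proof (Hb l Hl). pose proof (Hb u Hu). rewrite abs_le_iff in *. lra.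
     pose proof (Hp l u Hl Hu) as Hlu.
     intros f Hf. specialize (Hne f Hf).
     destruct (Rtotal_order (ta f) x) as [h|[h|h]]; [|contradiction|].
     * specialize (Ml f Hf h). specialize (Hp f l Hf Hl). unfold samesign in *. lra.
     * specialize (Mu f Hf h). specialize (Hp u f Hu Hf). unfold samesign in *. lra.
Qed.

Definition inV (V : list nat) (f : form) := forall p, In p (fst f) -> In (fst p) V.

Fixpoint Bnd (m : nat) (W : R) : R :=
  match m with O => 0 | S m' => (W + 1) * (Bnd m' (2 * W * W + 1) + 1) end.

Definition rf (j : nat) (f : form) : form := (rest j (fst f), snd f).
Definition cf (j : nat) (f : form) : Z := coef j (fst f).
Definition elimf (j : nat) (f g : form) : form := fsub (fscale (cf j g) (rf j f)) (fscale (cf j f) (rf j g)).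
Definition Snew (j : nat) (S : list form) : list form :=
  map (rf j) S ++ flat_map (fun f => map (fun g => elimf j f g) S) S.

Lemma fev_split a j f : fev a f = IZR (cf j f) * a j + fev a (rf j f).
Proof. unfold fev, rf, cf; simpl. rewrite (lev_split a j (fst f)). ring. Qed.

Lemma fnorm_split j f : (Z.abs (cf j f) + fnorm (rf j f) <= fnorm f)%Z.
Proof. unfold fnorm, rf, cf; simpl. pose proof (lnorm_split j (fst f)). lia. Qed.

Lemma inV_rf V j f : inV (j :: V) f -> inV V (rf j f).
Proof. intros H p Hp. simpl in Hp. apply in_rest in Hp as [H1 H2].
  destruct (H p H2) as [e|e]; [congruence|auto]. Qed.

Lemma inV_scale V z f : inV V f -> inV V (fscale z f).
Proof. intros H p Hp. simpl in Hp. unfold lscale in Hp. apply in_map_iff in Hp as [q [<- Hq]]. simpl. apply H, Hq. Qed.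

Lemma inV_add V f g : inV V f -> inV V g -> inV V (fadd f g).
Proof. intros H1 H2 p Hp. simpl in Hp. apply in_app_or in Hp as [Hp|Hp]; auto. Qed.

Lemma inV_sub V f g : inV V f -> inV V g -> inV V (fsub f g).
Proof. intros. apply inV_add; auto. apply inV_scale; auto. Qed.

Lemma rf_noj j f p : In p (fst (rf j f)) -> fst p <> j.
Proof. intros H. apply in_rest in H. tauto. Qed.

Lemma fm : forall (V : list nat) (W : R) (S : list form) (a : nat -> R),
  0 <= W -> (forall f, In f S -> inV V f /\ IZR (fnorm f) <= W) ->
  exists b, (forall i, Rabs (b i) <= Bnd (length V) W) /\
    forall f, In f S -> samesign (fev a f) (fev b f).
Proof.
  induction V as [|j V IH]; intros W S a HW HS.
  - exists (fun _ => 0). split. intros; simpl; rewrite Rabs_R0; lra.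
    intros f Hf. destruct (HS f Hf) as [Hi _].
    destruct f as [l c]. destruct l as [|p l].
    + unfold fev; simpl. apply ss_refl.
    + destruct (Hi p (or_introl eq_refl)).
  - set (W' := 2 * W * W + 1).
    assert (HW' : 0 <= W') by (unfold W'; nra).
    assert (HS' : forall h, In h (Snew j S) -> inV V h /\ IZR (fnorm h) <= W').
    { intros h Hh. unfold Snew in Hh. apply in_app_or in Hh as [Hh|Hh].
      - apply in_map_iff in Hh as [f [<- Hf]]. destruct (HS f Hf) as [Hi Hn]. split.
        apply inV_rf; auto. pose proof (fnorm_split j f). pose proof (IZR_le _ _ H).
        rewrite plus_IZR, abs_IZR in H0. pose proof (Rabs_pos (IZR (cf j f))). unfold W'. nra.
      - apply in_flat_map in Hh as [f [Hf Hh]]. apply in_map_iff in Hh as [g [<- Hg]].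
        destruct (HS f Hf) as [Hif Hnf]. destruct (HS g Hg) as [Hig Hng]. split.
        + apply inV_sub; apply inV_scale; apply inV_rf; auto.
        + unfold elimf. pose proof (fnorm_sub (fscale (cf j g) (rf j f)) (fscale (cf j f) (rf j g))).
          rewrite !fnorm_scale in H. apply IZR_le in H. rewrite plus_IZR, !mult_IZR, !abs_IZR in H.
          pose proof (fnorm_split j f) as Ef. apply IZR_le in Ef. rewrite plus_IZR, abs_IZR in Ef.
          pose proof (fnorm_split j g) as Eg. apply IZR_le in Eg. rewrite plus_IZR, abs_IZR in Eg.
          pose proof (IZR_le _ _ (fnorm_nonneg (rf j f))). pose proof (IZR_le _ _ (fnorm_nonneg (rf j g))).
          pose proof (Rabs_pos (IZR (cf j f))). pose proof (Rabs_pos (IZR (cf j g))).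
          unfold W'. nra. }
    destruct (IH W' (Snew j S) a HW' HS') as [b' [Hb' Hsb']].
    set (B' := Bnd (length V) W') in *.
    assert (HB'0 : 0 <= B') by (pose proof (Hb' 0%nat); pose proof (Rabs_pos (b' 0%nat)); lra).
    set (T := filter (fun f => negb (Z.eqb (cf j f) 0)) S).
    assert (HT : forall f, In f T -> In f S /\ IZR (cf j f) <> 0).
    { intros f Hf. unfold T in Hf. apply filter_In in Hf as [H1 H2]. split; auto.
      apply not_0_IZR. destruct (Z.eqb_spec (cf j f) 0); simpl in H2; auto; discriminate. }
    set (ta := fun f => - fev a (rf j f) / IZR (cf j f)).
    set (tb := fun f => - fev b' (rf j f) / IZR (cf j f)).
    assert (Hrf : forall f, In f S -> samesign (fev a (rf j f)) (fev b' (rf j f))).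
    { intros f Hf. apply Hsb'. unfold Snew. apply in_or_app. left. apply in_map. auto. }
    destruct (oneD T ta tb (a j) (W * (B' + 1))) as [y [Hy Hys]].
    + nra.
    + intros f Hf. destruct (HT f Hf) as [Hf1 Hf2]. unfold tb.
      pose proof (fev_bound b' (rf j f) B' HB'0 Hb').
      destruct (HS f Hf1) as [_ Hn]. pose proof (fnorm_split j f) as E. apply IZR_le in E.
      rewrite plus_IZR, abs_IZR in E.
      assert (1 <= Rabs (IZR (cf j f))).
      { rewrite <- abs_IZR. apply IZR_le. assert (cf j f <> 0%Z) by (intro e; apply Hf2; rewrite e; auto). lia. }
      unfold Rdiv. rewrite Rabs_mult, Rabs_Ropp, Rabs_inv.
      assert (0 < Rabs (IZR (cf j f))) by lra.
      apply Rle_trans with (Rabs (fev b' (rf j f))).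
      * rewrite <- (Rmult_1_r (Rabs (fev b' (rf j f)))) at 2. apply Rmult_le_compat_l. apply Rabs_pos.
        rewrite <- Rinv_1. apply Rinv_le_contravar; lra.
      * pose proof (Rabs_pos (IZR (cf j f))). nra.
    + intros f g Hf Hg. destruct (HT f Hf) as [Hf1 Hf2]. destruct (HT g Hg) as [Hg1 Hg2].
      assert (He : In (elimf j f g) (Snew j S)).
      { unfold Snew. apply in_or_app. right. apply in_flat_map. exists f. split; auto. apply in_map. auto. }
      pose proof (Hsb' _ He) as Hs. unfold elimf in Hs. rewrite !fev_sub, !fev_scale in Hs.
      apply (ss_mul_inv (IZR (cf j f) * IZR (cf j g))). apply Rmult_integral_contrapositive; auto.
      unfold ta, tb. replace (IZR (cf j f) * IZR (cf j g) * (- fev a (rf j g) / IZR (cf j g) - - fev a (rf j f) / IZR (cf j f)))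
        with (IZR (cf j g) * fev a (rf j f) - IZR (cf j f) * fev a (rf j g)) by (field; auto).
      replace (IZR (cf j f) * IZR (cf j g) * (- fev b' (rf j g) / IZR (cf j g) - - fev b' (rf j f) / IZR (cf j f)))
        with (IZR (cf j g) * fev b' (rf j f) - IZR (cf j f) * fev b' (rf j g)) by (field; auto).
      exact Hs.
    + exists (fun i => if Nat.eqb i j then y else b' i). split.
      * intros i. simpl length. simpl Bnd. fold W'. fold B'.
        destruct (Nat.eqb i j).
        -- nra.
        -- pose proof (Hb' i). nra.
      * intros f Hf.
        assert (Hev : fev (fun i => if Nat.eqb i j then y else b' i) f = IZR (cf j f) * y + fev b' (rf j f)).
        { rewrite (fev_split _ j f). rewrite Nat.eqb_refl. f_equal. unfold fev. f_equal.
          apply lev_ext. intros p Hp. apply rf_noj in Hp. apply Nat.eqb_neq in Hp. rewrite Hp. auto. }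
        rewrite Hev, (fev_split a j f).
        destruct (Z.eqb_spec (cf j f) 0) as [e|e].
        -- rewrite e. rewrite !Rmult_0_l, !Rplus_0_l. apply Hrf; auto.
        -- assert (Hf' : In f T) by (unfold T; apply filter_In; split; auto; apply Z.eqb_neq in e; rewrite e; auto).
           pose proof (Hys f Hf') as Hs. apply (ss_mul (IZR (cf j f))) in Hs.
           assert (IZR (cf j f) <> 0) by (apply not_0_IZR; auto).
           unfold ta, tb in Hs.
           replace (IZR (cf j f) * (a j - - fev a (rf j f) / IZR (cf j f))) with (IZR (cf j f) * a j + fev a (rf j f)) in Hs by (field; auto).
           replace (IZR (cf j f) * (y - - fev b' (rf j f) / IZR (cf j f))) with (IZR (cf j f) * y + fev b' (rf j f)) in Hs by (field; auto).
           exact Hs.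
Qed.

Definition pairs (P1 P2 : list form) (op : form -> form -> form) : list form :=
  flat_map (fun p => map (fun q => op p q) P2) P1.

Lemma in_pairs P1 P2 op p q : In p P1 -> In q P2 -> In (op p q) (pairs P1 P2 op).
Proof. intros. unfold pairs. apply in_flat_map. exists p. split; auto. apply in_map. auto. Qed.

Lemma pairs_in P1 P2 op h : In h (pairs P1 P2 op) -> exists p q, In p P1 /\ In q P2 /\ h = op p q.
Proof. unfold pairs. intros H. apply in_flat_map in H as [p [Hp H]]. apply in_map_iff in H as [q [<- Hq]].
  exists p, q. auto. Qed.

Fixpoint Pt (t : term) : list form :=
  match t with
  | TVar i => [([(i, 1%Z)], 0%Z)]
  | TZero => [([], 0%Z)]
  | TMinusOne => [([], (-1)%Z)]
  | TAdd t1 t2 => pairs (Pt t1) (Pt t2) fadd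
  | TNeg t1 => map (fscale (-1)) (Pt t1)
  | TMeet t1 t2 | TJoin t1 t2 => Pt t1 ++ Pt t2
  end.

Fixpoint St (t : term) : list form :=
  match t with
  | TVar _ | TZero | TMinusOne => []
  | TAdd t1 t2 => St t1 ++ St t2
  | TNeg t1 => St t1
  | TMeet t1 t2 | TJoin t1 t2 => St t1 ++ St t2 ++ pairs (Pt t1) (Pt t2) fsub
  end.

Fixpoint Sf (f : oformula) : list form :=
  match f with
  | FAtom t1 t2 => St t1 ++ St t2 ++ pairs (Pt t1) (Pt t2) fsub
  | FNot g => Sf g
  | FAnd g h | FOr g h => Sf g ++ Sf h
  end.

Fixpoint tv (t : term) : list nat :=
  match t with
  | TVar i => [i]
  | TZero | TMinusOne => []
  | TAdd t1 t2 | TMeet t1 t2 | TJoin t1 t2 => tv t1 ++ tv t2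
  | TNeg t1 => tv t1
  end.

Fixpoint fv (f : oformula) : list nat :=
  match f with
  | FAtom t1 t2 => tv t1 ++ tv t2
  | FNot g => fv g
  | FAnd g h | FOr g h => fv g ++ fv h
  end.

Definition agree (a b : nat -> R) (S : list form) := forall f, In f S -> samesign (fev a f) (fev b f).

Lemma agree_app a b S1 S2 : agree a b (S1 ++ S2) -> agree a b S1 /\ agree a b S2.
Proof. intros H; split; intros f Hf; apply H; apply in_or_app; auto. Qed.

Lemma term_piece t a b : agree a b (St t) ->
  exists p, In p (Pt t) /\ teval a t = fev a p /\ teval b t = fev b p.
Proof.
  induction t; simpl; intros H.
  - eexists; split; [left; reflexivity|]. unfold fev; simpl. split; ring.
  - eexists; split; [left; reflexivity|]. unfold fev; simpl. split; ring.
  - eexists; split; [left; reflexivity|]. unfold fev; simpl. split; ring.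
  - apply agree_app in H as [H1 H2]. destruct (IHt1 H1) as [p [Hp [E1 E2]]]. destruct (IHt2 H2) as [q [Hq [E3 E4]]].
    exists (fadd p q). split. apply in_pairs; auto. rewrite !fev_add. split; congruence.
  - destruct (IHt H) as [p [Hp [E1 E2]]]. exists (fscale (-1) p). split. apply in_map; auto.
    rewrite !fev_scale. simpl (IZR (-1)). split; [rewrite E1|rewrite E2]; ring.
  - apply agree_app in H as [H1 H]. apply agree_app in H as [H2 H3].
    destruct (IHt1 H1) as [p [Hp [E1 E2]]]. destruct (IHt2 H2) as [q [Hq [E3 E4]]].
    pose proof (H3 _ (in_pairs _ _ fsub p q Hp Hq)) as Hs. rewrite !fev_sub in Hs.
    destruct (Rle_dec (fev a p) (fev a q)).
    + exists p. split. apply in_or_app; auto. rewrite E1, E2, E3, E4.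
      rewrite Rmin_left by auto. rewrite Rmin_left. auto. unfold samesign in Hs; lra.
    + exists q. split. apply in_or_app; auto. rewrite E1, E2, E3, E4.
      rewrite Rmin_right by lra. rewrite Rmin_right. auto. unfold samesign in Hs; lra.
  - apply agree_app in H as [H1 H]. apply agree_app in H as [H2 H3].
    destruct (IHt1 H1) as [p [Hp [E1 E2]]]. destruct (IHt2 H2) as [q [Hq [E3 E4]]].
    pose proof (H3 _ (in_pairs _ _ fsub p q Hp Hq)) as Hs. rewrite !fev_sub in Hs.
    destruct (Rle_dec (fev a q) (fev a p)).
    + exists p. split. apply in_or_app; auto. rewrite E1, E2, E3, E4.
      rewrite Rmax_left by auto. rewrite Rmax_left. auto. unfold samesign in Hs; lra.
    + exists q. split. apply in_or_app; auto. rewrite E1, E2, E3, E4.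
      rewrite Rmax_right by lra. rewrite Rmax_right. auto. unfold samesign in Hs; lra.
Qed.

Lemma formula_same Phi a b : agree a b (Sf Phi) -> (holds a Phi <-> holds b Phi).
Proof.
  induction Phi; simpl; intros H.
  - apply agree_app in H as [H1 H]. apply agree_app in H as [H2 H3].
    destruct (term_piece t a b H1) as [p [Hp [E1 E2]]]. destruct (term_piece t0 a b H2) as [q [Hq [E3 E4]]].
    pose proof (H3 _ (in_pairs _ _ fsub p q Hp Hq)) as Hs. rewrite !fev_sub in Hs.
    rewrite E1, E2, E3, E4. unfold samesign in Hs. split; intros; lra.
  - specialize (IHPhi H). tauto.
  - apply agree_app in H as [H1 H2]. specialize (IHPhi1 H1). specialize (IHPhi2 H2). tauto.
  - apply agree_app in H as [H1 H2]. specialize (IHPhi1 H1). specialize (IHPhi2 H2). tauto.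
Qed.

Lemma inV_mono V V' f : inV V f -> incl V V' -> inV V' f.
Proof. intros H Hi p Hp. apply Hi, H, Hp. Qed.

Lemma Pt_prop t : forall p, In p (Pt t) -> inV (tv t) p /\ (fnorm p <= Z.of_nat (tsize t))%Z.
Proof.
  induction t; simpl; intros p Hp.
  - destruct Hp as [<-|[]]. split. intros q [<-|[]]; simpl; auto. unfold fnorm; simpl. lia.
  - destruct Hp as [<-|[]]. split. intros q []. unfold fnorm; simpl. lia.
  - destruct Hp as [<-|[]]. split. intros q []. unfold fnorm; simpl. lia.
  - apply pairs_in in Hp as [p1 [p2 [H1 [H2 ->]]]]. destruct (IHt1 _ H1) as [A1 B1]. destruct (IHt2 _ H2) as [A2 B2].
    split. apply inV_add; eapply inV_mono; eauto; intros x Hx; apply in_or_app; auto.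
    pose proof (fnorm_add p1 p2). lia.
  - apply in_map_iff in Hp as [q [<- Hq]]. destruct (IHt _ Hq). split. apply inV_scale; auto.
    rewrite fnorm_scale. change (Z.abs (-1)) with 1%Z. lia.
  - apply in_app_or in Hp as [Hp|Hp]; [destruct (IHt1 _ Hp)|destruct (IHt2 _ Hp)]; split; try lia;
    (eapply inV_mono; eauto; intros x Hx; apply in_or_app; auto).
  - apply in_app_or in Hp as [Hp|Hp]; [destruct (IHt1 _ Hp)|destruct (IHt2 _ Hp)]; split; try lia;
    (eapply inV_mono; eauto; intros x Hx; apply in_or_app; auto).
Qed.

Lemma diffs_prop t1 t2 h : In h (pairs (Pt t1) (Pt t2) fsub) ->
  inV (tv t1 ++ tv t2) h /\ (fnorm h <= Z.of_nat (tsize t1 + tsize t2))%Z.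
Proof. intros Hp. apply pairs_in in Hp as [p1 [p2 [H1 [H2 ->]]]].
  destruct (Pt_prop _ _ H1) as [A1 B1]. destruct (Pt_prop _ _ H2) as [A2 B2].
  split. apply inV_sub; eapply inV_mono; eauto; intros x Hx; apply in_or_app; auto.
  pose proof (fnorm_sub p1 p2). lia. Qed.

Lemma St_prop t : forall p, In p (St t) -> inV (tv t) p /\ (fnorm p <= Z.of_nat (tsize t))%Z.
Proof.
  induction t; simpl; intros p Hp; try destruct Hp.
  - apply in_app_or in Hp as [Hp|Hp]; [destruct (IHt1 _ Hp)|destruct (IHt2 _ Hp)]; split; try lia;
    (eapply inV_mono; eauto; intros x Hx; apply in_or_app; auto).
  - auto.
  - apply in_app_or in Hp as [Hp|Hp]; [destruct (IHt1 _ Hp); split; try lia; (eapply inV_mono; eauto; intros x Hx; apply in_or_app; auto)|].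
    apply in_app_or in Hp as [Hp|Hp]; [destruct (IHt2 _ Hp); split; try lia; (eapply inV_mono; eauto; intros x Hx; apply in_or_app; auto)|].
    apply diffs_prop; auto.
  - apply in_app_or in Hp as [Hp|Hp]; [destruct (IHt1 _ Hp); split; try lia; (eapply inV_mono; eauto; intros x Hx; apply in_or_app; auto)|].
    apply in_app_or in Hp as [Hp|Hp]; [destruct (IHt2 _ Hp); split; try lia; (eapply inV_mono; eauto; intros x Hx; apply in_or_app; auto)|].
    apply diffs_prop; auto.
Qed.

Lemma Sf_prop Phi : forall p, In p (Sf Phi) -> inV (fv Phi) p /\ (fnorm p <= Z.of_nat (fsize Phi))%Z.
Proof.
  induction Phi; simpl; intros p Hp.
  - apply in_app_or in Hp as [Hp|Hp]; [destruct (St_prop _ _ Hp); split; try lia; (eapply inV_mono; eauto; intros x Hx; apply in_or_app; auto)|].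
    apply in_app_or in Hp as [Hp|Hp]; [destruct (St_prop _ _ Hp); split; try lia; (eapply inV_mono; eauto; intros x Hx; apply in_or_app; auto)|].
    apply diffs_prop; auto.
  - auto.
  - apply in_app_or in Hp as [Hp|Hp]; [destruct (IHPhi1 _ Hp)|destruct (IHPhi2 _ Hp)]; split; try lia;
    (eapply inV_mono; eauto; intros x Hx; apply in_or_app; auto).
  - apply in_app_or in Hp as [Hp|Hp]; [destruct (IHPhi1 _ Hp)|destruct (IHPhi2 _ Hp)]; split; try lia;
    (eapply inV_mono; eauto; intros x Hx; apply in_or_app; auto).
Qed.

Lemma tv_len t : (length (tv t) <= tsize t)%nat.
Proof. induction t; simpl; try rewrite length_app; lia. Qed.
Lemma fv_len f : (length (fv f) <= fsize f)%nat.
Proof. induction f; simpl; try rewrite length_app; pose proof tv_len; try lia.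
  pose proof (tv_len t); pose proof (tv_len t0); lia. Qed.
Lemma tsize_pos t : (1 <= tsize t)%nat.
Proof. induction t; simpl; lia. Qed.
Lemma fsize_ge2 f : (2 <= fsize f)%nat.
Proof. induction f; simpl; try lia. pose proof (tsize_pos t); pose proof (tsize_pos t0); lia. Qed.

Lemma Bnd_nonneg m : forall W, 0 <= W -> 0 <= Bnd m W.
Proof. induction m; simpl; intros W HW. lra. pose proof (IHm (2*W*W+1) ltac:(nra)). nra. Qed.

Lemma pow2_ge1 k : (1 <= 2 ^ k)%nat.
Proof. induction k; simpl; lia. Qed.

Lemma Bnd_bound m : forall W, 0 <= W -> (W + 1) * (Bnd m W + 1) <= (4 * (W + 1)) ^ (2 ^ S m).
Proof.
  induction m; intros W HW.
  - simpl. nra.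
  - set (W' := 2*W*W+1). assert (HW' : 0 <= W') by (unfold W'; nra).
    specialize (IHm W' HW'). pose proof (Bnd_nonneg m W' HW').
    set (E := (2 ^ S m)%nat) in *. assert (HE : (1 <= E)%nat) by apply pow2_ge1.
    change (2 ^ S (S m))%nat with (2 * E)%nat. rewrite pow_mult.
    set (u := W + 1). simpl Bnd. fold W'. fold u.
    assert (H1 : (4 * (W' + 1)) ^ E <= (8 * (u * u)) ^ E).
    { apply pow_incr. unfold W', u. nra. }
    assert (H2 : (4 * u) ^ 2 = 2 * (8 * (u*u))) by (simpl; ring).
    rewrite H2, Rpow_mult_distr.
    assert (H3 : 2 <= 2 ^ E) by (rewrite <- pow_1 at 1; apply Rle_pow; lra || lia).
    assert (H4 : 8 * (u*u) <= (8*(u*u)) ^ E) by (rewrite <- pow_1 at 1; apply Rle_pow; unfold u in *; nra || lia).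
    assert (Hu : 1 <= u) by (unfold u; lra).
    assert (H5 : u * u <= W' + 1) by (unfold u, W'; pose proof (Rle_0_sqr (W-1)); unfold Rsqr in *; nra).
    assert (H6 : 0 <= (8*(u*u))^E) by (apply pow_le; nra).
    set (B := Bnd m W' + 1) in *. set (Y := (8*(u*u))^E) in *.
    assert (H7 : u * u * B <= Y).
    { apply Rle_trans with ((W'+1)*B). apply Rmult_le_compat_r. unfold B; lra. lra. lra. }
    assert (H8 : 2 * Y <= 2 ^ E * Y) by (apply Rmult_le_compat_r; lra).
    replace (u * (u * B + 1)) with (u*u*B + u) by ring. nra.
Qed.

Lemma ln2_pos : 0 < ln 2.
Proof. pose proof ln_lt_2. lra. Qed.

Theorem mainTheorem3 :
  exists c : Z,
  forall (n : nat) (Phi : oformula),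
    fvars_below n Phi ->
    (exists a : nat -> R, holds a Phi) ->
    exists (M : Z) (a : nat -> R),
      holds a Phi /\
      (forall i : nat, (i < n)%nat -> - powerRZ 2 M <= a i <= powerRZ 2 M) /\
      IZR (nbits M) <= IZR c * INR (fsize Phi) * log2R (INR (fsize Phi)).
Proof.
  exists 5%Z. intros n Phi _ [a Ha].
  set (N := fsize Phi).
  assert (HN : (2 <= N)%nat) by apply fsize_ge2.
  destruct (fm (fv Phi) (INR N) (Sf Phi) a (pos_INR N)) as [b [Hb Hs]].
  { intros f Hf. destruct (Sf_prop Phi f Hf) as [H1 H2]. split; auto.
    apply IZR_le in H2. rewrite <- INR_IZR_INZ in H2. exact H2. }
  set (K := (2 ^ (2 * N + 3))%nat).
  exists (Z.of_nat K), b. split; [|split].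
  - apply (formula_same Phi a b Hs). exact Ha.
  - intros i _. rewrite <- pow_powerRZ. apply abs_le_iff.
    eapply Rle_trans. apply Hb.
    set (m := length (fv Phi)). assert (Hm : (m <= N)%nat) by apply fv_len.
    pose proof (Bnd_bound m (INR N) (pos_INR N)) as HB.
    pose proof (Bnd_nonneg m (INR N) (pos_INR N)).
    assert (HX : 4 * (INR N + 1) <= 2 ^ (N + 2)).
    { pose proof (Nat.pow_gt_lin_r 2 N ltac:(lia)).
      assert (4 * (N + 1) <= 2 ^ (N + 2))%nat by (rewrite Nat.pow_add_r; simpl; lia).
      apply le_INR in H1. rewrite pow_INR, mult_INR, plus_INR in H1. rewrite (INR_IZR_INZ 4), (INR_IZR_INZ 2), (INR_IZR_INZ 1) in H1. simpl in H1. lra. }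
    apply Rle_trans with ((4 * (INR N + 1)) ^ (2 ^ S m)). pose proof (pos_INR N). nra.
    apply Rle_trans with ((2 ^ (N + 2)) ^ (2 ^ S m)). apply pow_incr. pose proof (pos_INR N). lra.
    apply Rle_trans with ((2 ^ (N + 2)) ^ (2 ^ S N)).
    { apply Rle_pow. apply pow_R1_Rle. lra. apply Nat.pow_le_mono_r; lia. }
    rewrite <- pow_mult. apply Rle_pow. lra. unfold K.
    replace (2 * N + 3)%nat with ((N + 2) + S N)%nat by lia. rewrite Nat.pow_add_r.
    apply Nat.mul_le_mono_r. pose proof (Nat.pow_gt_lin_r 2 (N+2) ltac:(lia)). lia.
  - unfold nbits. unfold K. rewrite Nat2Z.inj_pow. change (Z.of_nat 2) with 2%Z.
    rewrite Z.abs_eq by (apply Z.pow_nonneg; lia). rewrite Z.log2_pow2 by lia.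
    rewrite plus_IZR, <- INR_IZR_INZ. fold N.
    assert (HL : 1 <= log2R (INR N)).
    { unfold log2R. pose proof ln2_pos. assert (ln 2 <= ln (INR N)).
      { apply le_INR in HN. rewrite (INR_IZR_INZ 2) in HN. simpl in HN.
        destruct (Rle_lt_or_eq_dec _ _ HN) as [h|h]. left. apply ln_increasing; lra. rewrite h; lra. }
      apply Rmult_le_reg_r with (ln 2); auto. unfold Rdiv. rewrite Rmult_assoc, Rinv_l by lra. lra. }
    rewrite !plus_INR, mult_INR. apply le_INR in HN.
    rewrite (INR_IZR_INZ 2), (INR_IZR_INZ 3) in *. simpl in *. nra.
Qed.
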